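(* If $q\ge 7$ is an integer, then the achromatic number of $K_6\square K_q$ is at most $2q+7$.
   Context: For a finite simple graph $G$ and a finite colour set $C$, a vertex colouring $f:V(G)\to C$ is complete if for any two distinct colours $c_1,c_2\in C$ there is an edge $v_1v_2\in E(G)$ with $f(v_i)=c_i$, $i=1,2$. The achromatic number of $G$ is the maximum number of colours in a proper complete vertex colouring of $G$. The Cartesian product $G_1\square G_2$ has vertex set $V(G_1)\times V(G_2)$, with $(u_1,u_2)$ adjacent to $(w_1,w_2)$ iff either $u_1w_1\in E(G_1)$ and $u_2=w_2$, or $u_2w_2\in E(G_2)$ and $u_1=w_1$. *)

(* Defs.v *)
From mathcomp Require Import all_boot.
Set Implicit Arguments. Unset Strict Implicit. Unset Printing Implicit Defensive.

Record sgraph := SGraph {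
  vert : finType;
  adj : rel vert;
  adj_sym : symmetric adj;
  adj_irrefl : irreflexive adj }.

Definition complete_graph (n : nat) : sgraph :=
  @SGraph 'I_n (fun x y => x != y)
    (fun x y => congr1 negb (eq_sym x y)) (fun x => negbF (eqxx x)).

Definition cart_adj (G H : sgraph) : rel (vert G * vert H) :=
  fun u w => (adj u.1 w.1 && (u.2 == w.2)) || (adj u.2 w.2 && (u.1 == w.1)).

Lemma cart_adj_sym G H : symmetric (@cart_adj G H).
Proof.
move=> [a b] [c d]; rewrite /cart_adj /= (adj_sym a c) (adj_sym b d).
by rewrite (eq_sym b d) (eq_sym a c).
Qed.

Lemma cart_adj_irrefl G H : irreflexive (@cart_adj G H).
Proof. by move=> [a b]; rewrite /cart_adj /= !adj_irrefl. Qed.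

Definition cartesian (G H : sgraph) : sgraph :=
  @SGraph (vert G * vert H)%type (@cart_adj G H) (@cart_adj_sym G H) (@cart_adj_irrefl G H).

Definition proper_col (G : sgraph) k (f : {ffun vert G -> 'I_k}) : bool :=
  [forall u, forall v, adj u v ==> (f u != f v)].

Definition complete_col (G : sgraph) k (f : {ffun vert G -> 'I_k}) : bool :=
  [forall c1 : 'I_k, forall c2 : 'I_k, (c1 != c2) ==>
     [exists u, exists v, [&& adj u v, f u == c1 & f v == c2]]].

(* achromatic number: maximum k admitting a proper complete colouring with k colours.
   (Any such k with k >= 2 uses every colour, so k <= #|V|; the max is over k <= #|V|.) *)
Definition achromatic (G : sgraph) : nat :=
  \max_(k < #|vert G|.+1 |
        [exists f : {ffun vert G -> 'I_k}, proper_col f && complete_col f]) k.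

(* Main.v *)
Require Import Defs.
From mathcomp Require Import all_boot.
From mathcomp Require Import zify.

Section S.
Variable q : nat.
Hypothesis q1 : 0 < q.
Local Notation T := ('I_6 * 'I_q)%type.
Definition a (u v : T) : bool :=
  ((u.1 != v.1) && (u.2 == v.2)) || ((u.2 != v.2) && (u.1 == v.1)).
Definition Nb (u : T) : {set T} := [set v | a u v].

Lemma Nb_card u : #|Nb u| <= q + 4.
Proof.
have sub : Nb u \subset [set (i, u.2) | i in [set~ u.1]] :|: [set (u.1, j) | j in [set~ u.2]].
  apply/subsetP => -[i j]; rewrite inE /a /= => /orP[/andP[ne /eqP ->]|/andP[ne /eqP ->]];
    rewrite inE; apply/orP; [left|right]; apply/imsetP.
  - by exists i => //; rewrite !inE eq_sym.
  - by exists j => //; rewrite !inE eq_sym.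
apply: leq_trans (subset_leq_card sub) _.
apply: leq_trans (leq_card_setU _ _) _.
apply: leq_trans (leq_add (leq_imset_card _ _) (leq_imset_card _ _)) _.
rewrite !cardsC1 !card_ord /=; lia.
Qed.

Lemma class_big k (f : {ffun T -> 'I_k}) :
  (forall u v, a u v -> f u != f v) ->
  (forall c1 c2 : 'I_k, c1 != c2 -> exists u v, [&& a u v, f u == c1 & f v == c2]) ->
  2 * q + 8 <= k -> forall c, 3 <= #|[set v | f v == c]|.
Proof.
move=> prop comp hk c.
set A := [set v | f v == c].
set N := [set v | [exists u in A, a u v]].
have cov : k.-1 <= #|N|.
  have : [set~ c] \subset f @: N.
    apply/subsetP => c' /[!inE] ne; have [u [v /and3P[uv /eqP fu /eqP fv]]] := comp c c' ltac:(by rewrite eq_sym).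
    apply/imsetP; exists v => //; rewrite inE; apply/existsP; exists u.
    by rewrite inE fu eqxx uv.
  move/subset_leq_card; rewrite cardsC1 card_ord => h.
  exact: leq_trans h (leq_imset_card _ _).
have {}cov : k <= #|N|.+1 by apply: leq_trans (leqSpred k) _; rewrite ltnS.
rewrite leqNgt; apply/negP => small.
have : #|A| \in [:: 0; 1; 2] by rewrite !inE; lia.
rewrite !inE => /or3P[/eqP/cards0_eq A0|/cards1P[u Au]|/cards2P[u [w [uw Auw]]]].
- have : N = set0.
    apply/setP => v; rewrite !inE; apply/negbTE/existsP => -[u].
    by rewrite A0 inE.
  move=> N0; move: cov; rewrite N0 cards0; lia.
- have : N \subset Nb u.
    apply/subsetP => v; rewrite !inE => /existsP[u' /andP[]].
    by rewrite Au inE => /eqP ->.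
  move/subset_leq_card => h; have := Nb_card u; move=> h2; have h3 := leq_trans h h2; move: cov hk h3; move: #|N| => n; clear; lia.
- have : N \subset Nb u :|: Nb w.
    apply/subsetP => v; rewrite !inE => /existsP[u' /andP[]].
    by rewrite Auw !inE => /orP[] /eqP -> ->; rewrite ?orbT.
  move/subset_leq_card => h.
  have : u \in A by rewrite Auw !inE eqxx.
  rewrite inE => /eqP fu.
  have : w \in A by rewrite Auw !inE eqxx orbT.
  rewrite inE => /eqP fw.
  have nuw : ~~ a u w by apply/negP => /prop; rewrite fu fw eqxx.
  have n1 : u.1 != w.1.
    apply/eqP => e1; move: nuw; rewrite /a e1 eqxx /= andbT negbK => /eqP e2.
    by move: uw; rewrite -pair_eqE /pair_eq /= e1 e2 !eqxx.
  have n2 : u.2 != w.2.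
    apply/eqP => e2; move: nuw; rewrite /a e2 eqxx /= andbT n1.
    done.
  have I2 : [set (u.1, w.2); (w.1, u.2)] \subset Nb u :&: Nb w.
    apply/subsetP => v; rewrite !inE => /orP[] /eqP -> ; rewrite /a /= ?eqxx ?n1 ?n2 //=;
      rewrite ?(eq_sym w.1) ?(eq_sym w.2) ?n1 ?n2 ?orbT //.
  have c2 : 2 <= #|Nb u :&: Nb w|.
    apply: leq_trans (subset_leq_card I2); rewrite cards2 xpair_eqE negb_and n1 //.
  have := cardsU (Nb u) (Nb w).
  have := Nb_card u; have := Nb_card w.
  move: cov hk h c2; move: #|N| #|Nb u| #|Nb w| #|Nb u :|: Nb w| #|Nb u :&: Nb w| => n x y z t.
  clear; lia.
Qed.
Lemma main (k : nat) (f : {ffun vert (cartesian (complete_graph 6) (complete_graph q)) -> 'I_k}) :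
  proper_col f -> complete_col f -> k <= 2 * q + 7.
Proof.
move=> /forallP pr /forallP cm.
rewrite leqNgt; apply/negP => hk.
have prop : forall u v, a u v -> f u != f v.
  by move=> u v; move: (pr u) => /forallP /(_ v) /implyP.
have comp : forall c1 c2 : 'I_k, c1 != c2 -> exists u v, [&& a u v, f u == c1 & f v == c2].
  move=> c1 c2 ne; move: (cm c1) => /forallP /(_ c2) /implyP /(_ ne) /existsP[u /existsP[v H]].
  by exists u, v.
have big := @class_big k f prop comp ltac:(lia).
have S : \sum_(c < k) #|[set v | f v == c]| = 6 * q.
  have -> : 6 * q = \sum_(v : ('I_6 * 'I_q)%type) 1 by rewrite sum1_card card_prod !card_ord.
  rewrite (partition_big f predT) //=; apply: eq_bigr => c _.
  rewrite -sum1_card; apply: eq_bigl => v; rewrite inE.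
  by [].
have : \sum_(c < k) 3 <= 6 * q by rewrite -S; apply: leq_sum => c _; exact: big.
rewrite sum_nat_const card_ord; lia.
Qed.
End S.

Theorem corollary1 (q : nat) : 7 <= q ->
  achromatic (cartesian (complete_graph 6) (complete_graph q)) <= 2 * q + 7.
Proof.
move=> q7; have q1 : 0 < q by lia.
apply/bigmax_leqP => k /existsP[f /andP[pf cf]].
exact: main pf cf.
Qed.
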